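(* Let $q$ be a prime power and $1\leqslant s\leqslant q-1$. In the polynomial ring $\mathbb{F}_q[x_1,x_2,y_1,y_2]$ (or its fraction field) the following two identities hold: $$h_{s}\cdot (d_{2}^{*})^{s}=c_{1}^{*}\cdot u_{1}^{s}+u_{-1}^{q-s}\cdot u_{0}\cdot\sum_{i=1}^s (-1)^i\binom{s}{i} (u_{-1} u_{1})^{s-i}(u_{0}^{q+1})^{i-1},$$ $$h_{q-1-s}\cdot d_{2}^{s}=c_{1}\cdot u_{-1}^{s}+u_{0}\cdot u_{1}^{q-s}\cdot\sum_{i=1}^s (-1)^i\binom{s}{i} (u_{-1} u_{1})^{s-i}(u_{0}^{q+1})^{i-1}.$$
   Context: $\mathbb{F}_q$ is the finite field with $q=p^m$ elements. In $\mathbb{F}_q[x_1,x_2,y_1,y_2]$ let $*$ be the $\mathbb{F}_q$-algebra involution with $x_1\mapsto y_2$, $x_2\mapsto y_1$, $y_1\mapsto x_2$, $y_2\mapsto x_1$; write $f^*$ for the image of $f$. Define $d_2:=x_1x_2^q-x_2x_1^q$, $d_1:=x_1x_2^{q^2}-x_2x_1^{q^2}$, $c_0:=d_2^{q-1}$, $c_1:=d_1/d_2$ (a polynomial), and $c_0^*,c_1^*,d_2^*$ their images under $*$. Define $u_0:=x_1y_1+x_2y_2$, $u_1:=x_1^qy_1+x_2^qy_2$, $u_{-1}:=x_1y_1^q+x_2y_2^q$. For $0\leqslant s\leqslant q-1$ define $$h_s:=\frac{u_1^{s+1}(d_2^* )^{q-1-s}+u_{-1}^{q-s}d_2^{s}}{u_0^{q}}.$$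 (One has $h_0=c_1^*$, $h_{q-1}=c_1$, $h_s^*=h_{q-1-s}$.) *)

(* Defs.v *)
From HB Require Import structures.
From mathcomp Require Import all_boot all_order all_algebra all_field.
From mathcomp Require Import mpoly fraction.
Set Implicit Arguments. Unset Strict Implicit. Unset Printing Implicit Defensive.
Import GRing.Theory.
Local Open Scope ring_scope.

(* Polynomial ring F_q[x1,x2,y1,y2] = {mpoly F[4]} with variables
   x1 = 'X_0, x2 = 'X_1, y1 = 'X_2, y2 = 'X_3; q := #|F|.
   All quantities are computed in the fraction field {fraction {mpoly F[4]}}. *)
Section Defs.
Variable F : finFieldType.

Definition P4 := {mpoly F[4]}.
Definition K4 := {fraction P4}.

Definition qq : nat := #|F|.

Definition vX1 : P4 := 'X_(0 : 'I_4).
Definition vX2 : P4 := 'X_(1 : 'I_4).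
Definition vY1 : P4 := 'X_(2 : 'I_4).
Definition vY2 : P4 := 'X_(3 : 'I_4).

Definition star (f : P4) : P4 := f \mPo [tuple vY2; vY1; vX2; vX1].

Definition emb (f : P4) : K4 := tofrac f.

Definition d2p : P4 := vX1 * vX2 ^+ qq - vX2 * vX1 ^+ qq.
Definition d1p : P4 := vX1 * vX2 ^+ (qq ^ 2) - vX2 * vX1 ^+ (qq ^ 2).

Definition d2 : K4 := emb d2p.
Definition d1 : K4 := emb d1p.
Definition c0 : K4 := d2 ^+ (qq - 1).
Definition c1 : K4 := d1 / d2.
Definition d2s : K4 := emb (star d2p).
Definition c0s : K4 := emb (star (d2p ^+ (qq - 1))).
Definition c1s : K4 := emb (star d1p) / emb (star d2p).

Definition u0 : K4 := emb (vX1 * vY1 + vX2 * vY2).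
Definition u1 : K4 := emb (vX1 ^+ qq * vY1 + vX2 ^+ qq * vY2).
Definition um1 : K4 := emb (vX1 * vY1 ^+ qq + vX2 * vY2 ^+ qq).

Definition h (s : nat) : K4 :=
  (u1 ^+ s.+1 * d2s ^+ (qq - 1 - s) + um1 ^+ (qq - s) * d2 ^+ s) / u0 ^+ qq.

Definition Ssum (s : nat) : K4 :=
  \sum_(1 <= i < s.+1) (-1) ^+ i * 'C(s, i)%:R
     * (um1 * u1) ^+ (s - i) * (u0 ^+ qq.+1) ^+ (i - 1).
End Defs.

(* Main.v *)
Require Import Defs.
From HB Require Import structures.
From mathcomp Require Import all_boot all_order all_algebra all_field.
From mathcomp Require Import mpoly fraction.
From mathcomp Require abelian.
From mathcomp Require Import ring zify.
Import GRing.Theory.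
Local Open Scope ring_scope.
Section K.
Variables (R : fieldType) (q : nat) (a b c d : R).
Hypothesis Hq : [pchar R].-nat q.

Lemma frobD (x y : R) : (x + y) ^+ q = x ^+ q + y ^+ q.
Proof. exact: exprDn_pchar. Qed.
Lemma frobB (x y : R) : (x - y) ^+ q = x ^+ q - y ^+ q.
Proof. by rewrite frobD exprNn_pchar. Qed.
Lemma frobX (x : R) : (x ^+ q) ^+ q = x ^+ (q ^ 2).
Proof. by rewrite -exprM mulnn. Qed.

Let u0 := a*c+b*d.
Let u1 := a^+q*c + b^+q*d.
Let um1 := a*c^+q + b*d^+q.
Let D2 := a*b^+q - b*a^+q.
Let D2s := d*c^+q - c*d^+q.
Let D1 := a*b^+(q^2) - b*a^+(q^2).
Let D1s := d*c^+(q^2) - c*d^+(q^2).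

Lemma F1 : u1 * D2s^+q + um1^+q * D2s = D1s * u0^+q.
Proof.
rewrite /u0 /u1 /um1 /D2s /D1s frobB frobD frobD !exprMn !frobX.
ring.
Qed.

Lemma F2 : um1 * D2^+q + u1^+q * D2 = D1 * u0^+q.
Proof.
rewrite /u0 /u1 /um1 /D2 /D1 frobB frobD frobD !exprMn !frobX.
ring.
Qed.

Lemma F3 : D2 * D2s = um1 * u1 - u0 * u0 ^+ q.
Proof.
rewrite /u0 /u1 /um1 /D2 /D2s frobD !exprMn.
ring.
Qed.
Lemma binom_aux (R' : comNzRingType) (x y : R') (s : nat) :
  y * (\sum_(1 <= i < s.+1) (-1) ^+ i * 'C(s, i)%:R * x ^+ (s - i) * y ^+ (i - 1))
  = (x - y) ^+ s - x ^+ s.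
Proof.
rewrite exprBn big_ord_recl /= subn0 bin0 expr0 !mul1r mulr1 mulr1n [x ^+ s + _]addrC addrK.
rewrite big_add1 big_mkord mulr_sumr; apply: eq_bigr => i _.
rewrite /bump /= add1n subSS subn0 -[RHS]mulr_natr !exprS; ring.
Qed.

Lemma keyid (s : nat) : (1 <= s)%N -> (s <= q - 1)%N ->
  u0 != 0 -> D2 != 0 -> D2s != 0 ->
  let SS := \sum_(1 <= i < s.+1) (-1) ^+ i * 'C(s, i)%:R
     * (um1 * u1) ^+ (s - i) * (u0 ^+ q.+1) ^+ (i - 1) in
  (u1 ^+ s.+1 * D2s ^+ (q - 1 - s) + um1 ^+ (q - s) * D2 ^+ s) / u0 ^+ q * D2s ^+ s
    = D1s / D2s * u1 ^+ s + um1 ^+ (q - s) * u0 * SS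
  /\
  (u1 ^+ (q - 1 - s).+1 * D2s ^+ (q - 1 - (q - 1 - s)) + um1 ^+ (q - (q - 1 - s)) * D2 ^+ (q - 1 - s)) / u0 ^+ q * D2 ^+ s
    = D1 / D2 * um1 ^+ s + u0 * u1 ^+ (q - s) * SS.
Proof.
move=> s1 sq nu0 nD2 nD2s SS.
have hSS : SS = ((D2 * D2s) ^+ s - (um1 * u1) ^+ s) / u0 ^+ q.+1.
  by rewrite F3 -exprS -binom_aux /SS [u0 ^+ q.+1 * _]mulrC mulfK //; exact: expf_neq0.
have nu0q : u0 ^+ q != 0 by exact: expf_neq0.
have hD1s : D1s = (u1 * D2s^+q + um1^+q * D2s) / u0 ^+ q by rewrite F1 mulfK.
have hD1 : D1 = (um1 * D2^+q + u1^+q * D2) / u0 ^+ q by rewrite F2 mulfK.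
have [k hk] : exists k, q = (s + k).+1 by exists (q - 1 - s)%N; lia.
move: hSS hD1s hD1 nu0q; rewrite hk.
have -> : ((s + k).+1 - 1 - s = k)%N by lia.
have -> : ((s + k).+1 - s = k.+1)%N by lia.
have -> : ((s + k).+1 - 1 - k = s)%N by lia.
have -> : ((s + k).+1 - k = s.+1)%N by lia.
move=> -> -> -> nu0q.
rewrite !exprS !exprD !exprMn.
split; field; apply/and4P; split => //; exact: expf_neq0.
Qed.
End K.

Section Main.
Variable F : finFieldType.

Lemma charK : [pchar K4 F].-nat (qq F).
Proof.
have [p pp pF] := finPcharP F.
have pP : p \in [pchar P4 F] by exact: (rmorph_pchar (@mpolyC 4 F) pF).
have pK : p \in [pchar K4 F] by exact: (rmorph_pchar (@tofrac (P4 F)) pP).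
rewrite (eq_pnat _ (pcharf_eq pK)) /qq -cardsT.
exact: abelian.abelem_pgroup (abelian.fin_ring_pchar_abelem pF).
Qed.

Lemma qgt1 : (1 < qq F)%N.
Proof. exact: finNzRing_gt1. Qed.

Lemma binom_nz (i j : 'I_4) (q : nat) : i != j -> (1 < q)%N ->
  ('X_i * 'X_j ^+ q - 'X_j * 'X_i ^+ q : P4 F) != 0.
Proof.
move=> ij q1.
rewrite !mpolyXn -!mpolyXD; apply/eqP => /(congr1 (mcoeff (U_(i) + U_(j) *+ q)%MM)).
rewrite mcoeffB !mcoeffX eqxx mcoeff0.
have -> : ((U_(j) + U_(i) *+ q)%MM == (U_(i) + U_(j) *+ q)%MM) = false.
  apply/negbTE/eqP => /mnmP /(_ i); rewrite !mnmDE !mulmnE !mnm1E eqxx /=.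
  rewrite (eq_sym j i) (negbTE ij) /=; lia.
by rewrite subr0; apply/eqP; exact: oner_neq0.
Qed.
Lemma u0_nz' (i j k l : 'I_4) : i != j -> i != k -> i != l ->
  ('X_i * 'X_j + 'X_k * 'X_l : P4 F) != 0.
Proof.
move=> ij ik il.
rewrite -!mpolyXD; apply/eqP => /(congr1 (mcoeff (U_(i) + U_(j))%MM)).
rewrite mcoeffD !mcoeffX eqxx mcoeff0.
have -> : ((U_(k) + U_(l))%MM == (U_(i) + U_(j))%MM) = false.
  apply/negbTE/eqP => /mnmP /(_ i); rewrite !mnmDE !mnm1E eqxx.
  by rewrite (eq_sym k i) (eq_sym l i) (eq_sym j i) (negbTE ij) (negbTE ik) (negbTE il).
by rewrite addr0; apply/eqP; exact: oner_neq0.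
Qed.
Lemma sX1 : star (vX1 F) = vY2 F. Proof. by rewrite /star {1}/vX1 comp_mpolyXU. Qed.
Lemma sX2 : star (vX2 F) = vY1 F. Proof. by rewrite /star {1}/vX2 comp_mpolyXU. Qed.
Lemma sY1 : star (vY1 F) = vX2 F. Proof. by rewrite /star {1}/vY1 comp_mpolyXU. Qed.
Lemma sY2 : star (vY2 F) = vX1 F. Proof. by rewrite /star {1}/vY2 comp_mpolyXU. Qed.
Lemma sD2 : star (d2p F) = vY2 F * vY1 F ^+ qq F - vY1 F * vY2 F ^+ qq F.
Proof. rewrite /star /d2p !rmorphB !rmorphM !rmorphXn /= !comp_mpolyXU //. Qed.
Lemma sD1 : star (d1p F) = vY2 F * vY1 F ^+ (qq F ^ 2) - vY1 F * vY2 F ^+ (qq F ^ 2).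
Proof. rewrite /star /d1p !rmorphB !rmorphM !rmorphXn /= !comp_mpolyXU //. Qed.
End Main.

Theorem lemma3p1 (F : finFieldType) (s : nat) :
  (1 <= s)%N -> (s <= qq F - 1)%N ->
  h F s * d2s F ^+ s
    = c1s F * u1 F ^+ s + um1 F ^+ (qq F - s) * u0 F * Ssum F s
  /\
  h F (qq F - 1 - s) * d2 F ^+ s
    = c1 F * um1 F ^+ s + u0 F * u1 F ^+ (qq F - s) * Ssum F s.
Proof.
move=> s1 sq.
set q := qq F.
pose a := emb (vX1 F); pose b := emb (vX2 F); pose c := emb (vY1 F); pose d := emb (vY2 F).
have Eu0 : u0 F = a*c+b*d by rewrite /u0 /emb rmorphD !rmorphM.
have Eu1 : u1 F = a^+q*c+b^+q*d by rewrite /u1 /emb rmorphD !rmorphM !rmorphXn.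
have Eum1 : um1 F = a*c^+q+b*d^+q by rewrite /um1 /emb rmorphD !rmorphM !rmorphXn.
have Ed2 : d2 F = a*b^+q-b*a^+q by rewrite /d2 /d2p /emb rmorphB !rmorphM !rmorphXn.
have Ed1 : d1 F = a*b^+(q^2)-b*a^+(q^2) by rewrite /d1 /d1p /emb rmorphB !rmorphM !rmorphXn.
have Ed2s : d2s F = d*c^+q-c*d^+q.
  by rewrite /d2s sD2 /emb !rmorphB !rmorphM !rmorphXn.
have Ed1s : emb (star (d1p F)) = d*c^+(q^2)-c*d^+(q^2).
  by rewrite sD1 /emb !rmorphB !rmorphM !rmorphXn.
have nu0 : a*c+b*d != 0 by rewrite -Eu0 /u0 /emb tofrac_eq0; exact: u0_nz'.
have nd2 : a*b^+q-b*a^+q != 0 by rewrite -Ed2 /d2 /emb tofrac_eq0; rewrite ?/d2p /vX1 /vX2 /vY1 /vY2; apply: binom_nz => //; exact: qgt1.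
have nd2s : d*c^+q-c*d^+q != 0.
  rewrite -Ed2s /d2s /emb tofrac_eq0 sD2.
  rewrite ?/d2p /vX1 /vX2 /vY1 /vY2; apply: binom_nz => //; exact: qgt1.
have := @keyid _ q a b c d (charK F) s s1 sq nu0 nd2 nd2s.
rewrite /h /Ssum /c1 /c1s -/(d2s F) Ed1s Ed2s Ed1 Ed2 Eu0 Eu1 Eum1 /= -/q.
by [].
Qed.
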